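(* Let $n$ be even, and let $\mathbf{X}=\{X_{rj}:r,j=1,\dots,n\}$ be the switch variables of the standard lightbulb process, with $X_j=(\sum_{r=1}^nX_{rj})\bmod 2$ and $X=\sum_jX_j$. For each $i=1,\dots,n$ construct $\mathbf{X}^i$ as follows. Let $J^i$ have conditional distribution, given $\mathbf{X}$, uniform on $\{j: X_{n/2,j}=1-X_{n/2,i}\}$. If $X_i=1$ set $\mathbf{X}^i=\mathbf{X}$. Otherwise let $\mathbf{X}^i=\{X^i_{rj}\}$ with $X^i_{rj}=X_{rj}$ for $r\ne n/2$; $X^i_{n/2,j}=X_{n/2,j}$ for $j\notin\{i,J^i\}$; $X^i_{n/2,i}=X_{n/2,J^i}$; $X^i_{n/2,J^i}=X_{n/2,i}$ (i.e. the stage $n/2$ switch variables of bulbs $i$ and $J^i$ are interchanged). Let $X^i_j=(\sum_{r=1}^nX^i_{rj})\bmod 2$ and $X^i=\sum_{j=1}^nX^i_j$. Let $I$ be uniform on $\{1,\dots,n\}$, independent of all other variables. Then $X^s=X^I$ has the $X$-size bias distribution, and $$X^s-X=2\,\mathbf{1}_{\{X_I=0,\,X_{J^I}=0\}}\quad\text{and}\quad X\le X^s\le X+2.$$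
   Context: Standard lightbulb process: $n$ bulbs, all initially off, $n$ stages; at stage $r=1,\dots,n$ a uniformly random subset of exactly $r$ bulbs is toggled, independently across stages. The switch variable $X_{rj}\in\{0,1\}$ is $1$ iff bulb $j$ is toggled at stage $r$; thus $P(X_{rj}=e_{rj}\ \forall r,j)=\prod_{r=1}^n\binom{n}{r}^{-1}$ if $\sum_je_{rj}=r$ for all $r$, and $0$ otherwise. A random variable $X^s$ has the $X$-size bias distribution if $E[Xg(X)]=E[X]\,E[g(X^s)]$ for all bounded continuous $g$. *)

(* Defs.v *)
From HB Require Import structures.
From mathcomp Require Import all_boot all_order all_algebra.
From mathcomp Require Import all_classical all_reals topology normedtype.
Set Implicit Arguments. Unset Strict Implicit. Unset Printing Implicit Defensive.
Import Order.TTheory GRing.Theory Num.Theory.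
Import numFieldNormedType.Exports.
Local Open Scope ring_scope.

(* Conventions: stage r (1 <= r <= n) is indexed by r' : 'I_n with r = r'.+1;
   bulb j (1 <= j <= n) is indexed by j' : 'I_n with j = j'.+1.
   A switch configuration e assigns to stage r' and bulb j the value X_{r'+1, j+1}. *)
Definition config (n : nat) := {ffun 'I_n -> {ffun 'I_n -> bool}}.

Definition valid_config n (e : config n) : bool :=
  [forall r : 'I_n, (\sum_(j < n) e r j == r.+1)%N].

Definition switch_prob (R : realType) n (e : config n) : R :=
  if valid_config e then \prod_(r < n) ('C(n, r.+1)%:R)^-1 else 0.

(* switch variable at stage number s (1-based), bulb j *)
Definition stageval n (e : config n) (s : nat) (j : 'I_n) : bool :=
  if @insub _ (fun k => k < n)%N _ s.-1 is Some r then e r j else false.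

Definition bulb n (e : config n) (j : 'I_n) : nat := ((\sum_(r < n) e r j) %% 2)%N.

Definition Xtot n (e : config n) : nat := (\sum_(j < n) bulb e j)%N.

Definition Jset n (e : config n) (i : 'I_n) : {set 'I_n} :=
  [set j | stageval e (n %/ 2) j != stageval e (n %/ 2) i].

Definition swap_mid n (e : config n) (i j : 'I_n) : config n :=
  [ffun r : 'I_n => [ffun k : 'I_n =>
     if (r.+1 == n %/ 2)%N then
       (if k == i then e r j else if k == j then e r i else e r k)
     else e r k]].

(* joint sample space: (switch configuration, I, J^I) *)
Definition Omega n := (config n * 'I_n * 'I_n)%type.

Definition joint_prob (R : realType) n (w : Omega n) : R :=
  let: (e, i, j) := w in
  switch_prob R e * (n%:R)^-1 *
  (if j \in Jset e i then (#|Jset e i|%:R)^-1 else 0).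

Definition Xconf_s n (w : Omega n) : config n :=
  let: (e, i, j) := w in if (bulb e i == 1)%N then e else swap_mid e i j.

Definition Xw n (w : Omega n) : nat := Xtot w.1.1.
Definition Xsw n (w : Omega n) : nat := Xtot (Xconf_s w).

Definition Expect (R : realType) (T : finType) (P : T -> R) (f : T -> R) : R :=
  \sum_(w : T) P w * f w.

Definition size_bias_of (R : realType) (T : finType) (P : T -> R) (X Xs : T -> R) :=
  forall g : R -> R, continuous g -> (exists M : R, forall x, `|g x| <= M) ->
    Expect P (fun w => X w * g (X w)) = Expect P X * Expect P (fun w => g (Xs w)).

(* Main.v *)
Require Import Defs.
From HB Require Import structures.
From mathcomp Require Import all_boot all_order all_algebra all_fingroup.
From mathcomp Require Import all_classical all_reals topology normedtype.
From mathcomp Require Import zify ring lra.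
Import Order.TTheory GRing.Theory Num.Theory.
Local Open Scope ring_scope.
Set Implicit Arguments. Unset Strict Implicit. Unset Printing Implicit Defensive.

Section Aux.
Variable n : nat.
Hypothesis hn : (0 < n)%N.
Hypothesis hev : ~~ odd n.

Lemma n_mod2 : (n %% 2 = 0)%N.
Proof. by rewrite modn2 (negbTE hev). Qed.

Lemma m_pos : (0 < n %/ 2)%N.
Proof. have := n_mod2; have := hn; lia. Qed.

Lemma mid_lt : ((n %/ 2).-1 < n)%N.
Proof. have := n_mod2; have := hn; lia. Qed.

Definition r0 : 'I_n := Ordinal mid_lt.

Lemma stagevalE (e : config n) k : stageval e (n %/ 2) k = e r0 k.
Proof.
rewrite /stageval; case: insubP => [u _ hu|]; last by rewrite mid_lt.
by congr (e _ k); apply: val_inj; rewrite hu.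
Qed.

Lemma midE (r : 'I_n) : (r.+1 == n %/ 2)%N = (r == r0).
Proof.
have := m_pos; rewrite -val_eqE /= => h.
by apply/eqP/eqP; lia.
Qed.

Lemma swapE (e : config n) i j r k :
  swap_mid e i j r k = e r (if r == r0 then tperm i j k else k).
Proof.
rewrite /swap_mid !ffunE midE; case: (r == r0) => //.
case: tpermP => [->|->|/eqP/negbTE-> /eqP/negbTE->] //; rewrite ?eqxx //.
by case: eqVneq => [->|].
Qed.

Lemma swap_row (e : config n) i j r :
  (\sum_k swap_mid e i j r k = \sum_k e r k)%N.
Proof.
under eq_bigr do rewrite swapE.
case: (r == r0) => //.
by rewrite [RHS](reindex_inj (@perm_inj _ (tperm i j))).
Qed.

Lemma va_swap (e : config n) i j : valid_config (swap_mid e i j) = valid_config e.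
Proof. by apply: eq_forallb => r; rewrite swap_row. Qed.

Lemma swapK (e : config n) i j : swap_mid (swap_mid e i j) i j = e.
Proof.
apply/ffunP => r; apply/ffunP => k; rewrite !swapE.
by case: (r == r0); rewrite ?tpermK.
Qed.

Lemma J_swap (e : config n) i j :
  (j \in Jset (swap_mid e i j) i) = (j \in Jset e i).
Proof.
by rewrite /Jset !inE !stagevalE !swapE eqxx tpermL tpermR eq_sym.
Qed.

Lemma bulbE (e : config n) k : bulb e k = odd (\sum_r e r k).
Proof. by rewrite /bulb modn2. Qed.

Lemma J_neq (e : config n) i j : j \in Jset e i -> e r0 j = ~~ e r0 i.
Proof. by rewrite /Jset inE !stagevalE; case: (e r0 j); case: (e r0 i). Qed.

Lemma odd_swap (e : config n) i j k :
  (odd (\sum_r swap_mid e i j r k) =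
   odd (\sum_r e r k) (+) (e r0 k (+) e r0 (tperm i j k)))%N.
Proof.
rewrite (bigD1 r0) //= [in RHS](bigD1 r0) //= !swapE eqxx.
have -> : (\sum_(r < n | r != r0) swap_mid e i j r k = \sum_(r < n | r != r0) e r k)%N.
  by apply: eq_bigr => r /negbTE h; rewrite swapE h.
rewrite !oddD !oddb.
by case: (e r0 k); case: (e r0 (tperm i j k)); case: (odd _).
Qed.


Lemma J_ij (e : config n) i j : j \in Jset e i -> i != j.
Proof. by rewrite /Jset inE; apply: contraNneq => ->. Qed.

Lemma bulb_swap_i (e : config n) i j : j \in Jset e i ->
  bulb (swap_mid e i j) i = ~~ odd (\sum_r e r i).
Proof.
move=> hj; rewrite bulbE odd_swap tpermL (J_neq hj).
by case: (e r0 i); case: (odd _).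
Qed.

Lemma bulb_swap_j (e : config n) i j : j \in Jset e i ->
  bulb (swap_mid e i j) j = ~~ odd (\sum_r e r j).
Proof.
move=> hj; rewrite bulbE odd_swap tpermR (J_neq hj).
by case: (e r0 i); case: (odd _).
Qed.

Lemma bulb_swap_k (e : config n) i j k : k != i -> k != j ->
  bulb (swap_mid e i j) k = bulb e k.
Proof.
move=> hi hj; rewrite !bulbE odd_swap tpermD 1?eq_sym //.
by rewrite addbb addbF.
Qed.

Lemma sum2 (F : 'I_n -> nat) i j : i != j ->
  (\sum_k F k = F i + F j + \sum_(k | (k != i) && (k != j)) F k)%N.
Proof.
move=> hij; rewrite (bigD1 i) //= (bigD1 j) /=; last by rewrite eq_sym.
by rewrite addnA.
Qed.

Lemma Xtot_swap (e : config n) i j : j \in Jset e i -> ~~ odd (\sum_r e r i) ->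
  Xtot (swap_mid e i j) = (Xtot e + 2 * (bulb e j == 0))%N.
Proof.
move=> hj hi; have hij := J_ij hj.
rewrite /Xtot (sum2 _ hij) [in RHS](sum2 _ hij).
rewrite (eq_bigl (fun k => (k != i) && (k != j))) //.
rewrite (eq_bigr (fun k => bulb e k)); last by move=> k /andP[a b]; rewrite bulb_swap_k.
rewrite bulb_swap_i // bulb_swap_j // !bulbE (negbTE hi).
case: (odd (\sum_r e r j)) => /=; rewrite ?add0n ?addn0 ?muln0 ?muln1 // addnC //.
Qed.

Lemma sum_bool (b : 'I_n -> bool) : (\sum_j b j = #|[set j | b j]|)%N.
Proof.
rewrite -sum1dep_card [RHS]big_mkcond /=; apply: eq_bigr => j _.
by case: (b j).
Qed.

Lemma Jcard (e : config n) i : valid_config e -> #|Jset e i| = (n %/ 2)%N.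
Proof.
move=> /forallP /(_ r0) /eqP hs.
have hr : (r0.+1 = n %/ 2)%N by rewrite /= prednK // m_pos.
rewrite hr sum_bool in hs.
have hc := cardsC [set j | e r0 j]; rewrite card_ord hs in hc.
rewrite /Jset; case hi: (e r0 i).
- have -> : [set j | stageval e (n %/ 2) j != stageval e (n %/ 2) i] = ~: [set j | e r0 j].
    by apply/setP => j; rewrite !inE !stagevalE hi; case: (e r0 j).
  move: hc; set c := #|~: _|; have := n_mod2; lia.
- have -> : [set j | stageval e (n %/ 2) j != stageval e (n %/ 2) i] = [set j | e r0 j].
    by apply/setP => j; rewrite !inE !stagevalE hi; case: (e r0 j).
  by rewrite hs.
Qed.

End Aux.

Lemma sum_boolT (T : finType) (b : T -> bool) : (\sum_j b j = #|[set j | b j]|)%N.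
Proof.
rewrite -sum1dep_card [RHS]big_mkcond /=; apply: eq_bigr => j _.
by case: (b j).
Qed.

Lemma count_row n k :
  (\sum_(f : {ffun 'I_n -> bool}) ((\sum_j f j == k) : nat) = 'C(n, k))%N.
Proof.
rewrite (reindex (fun A : {set 'I_n} => [ffun j => j \in A])) /=; last first.
  exists (fun f : {ffun 'I_n -> bool} => [set j | f j]) => [A _|f _].
    by apply/setP => j; rewrite inE ffunE.
  by apply/ffunP => j; rewrite ffunE inE.
under eq_bigr => A _.
  rewrite (_ : (\sum_j [ffun j => j \in A] j)%N = #|A|); last first.
    under eq_bigr do rewrite ffunE.
    by rewrite sum_boolT; apply: eq_card => j; rewrite inE.
  over.
by rewrite sum_boolT card_draws card_ord.
Qed.

Lemma sum_pair (R : nmodType) (T1 T2 : finType) (F : T1 * T2 -> R) :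
  \sum_w F w = \sum_a \sum_b F (a, b).
Proof. by rewrite pair_bigA; apply: eq_bigr => -[]. Qed.

Section Real.
Variable R : realType.
Variable n : nat.
Hypothesis hn : (0 < n)%N.
Hypothesis hev : ~~ odd n.

Let m := (n %/ 2)%N.

Lemma count_valid :
  \sum_(e : config n) (if valid_config e then 1 else 0 : R) =
  \prod_(r < n) ('C(n, r.+1))%:R.
Proof.
have -> : \prod_(r < n) ('C(n, r.+1))%:R =
   \prod_(r < n) \sum_(f : {ffun 'I_n -> bool}) ((((\sum_j f j)%N == r.+1)%N : nat)%:R : R).
  by apply: eq_bigr => r _; rewrite -natr_sum count_row.
rewrite bigA_distr_bigA /=; apply: eq_bigr => e _.
case: (boolP (valid_config e)) => h.
  rewrite big1 // => r _; by move/forallP: h => /(_ r) ->.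
move/forallPn: h => [r hr]; rewrite (bigD1 r) //= (negbTE hr) mul0r //.
Qed.

Definition K : R := \prod_(r < n) ('C(n, r.+1)%:R)^-1.

Lemma spE (e : config n) : switch_prob R e = if valid_config e then K else 0.
Proof. by []. Qed.

Lemma total : \sum_(e : config n) (if valid_config e then K else 0) = 1.
Proof.
have -> : \sum_(e : config n) (if valid_config e then K else 0) =
   K * \sum_(e : config n) (if valid_config e then 1 else 0 : R).
  by rewrite mulr_sumr; apply: eq_bigr => e _; case: ifP; rewrite ?mulr1 ?mulr0.
rewrite count_valid /K prodfV mulVf //.
rewrite prodf_seq_neq0; apply/allP => r _ /=.
by rewrite pnatr_eq0 -lt0n bin_gt0.
Qed.


Lemma XconfE (e : config n) i j :
  Xconf_s (e, i, j) = if bulb e i == 1%N then e else swap_mid e i j.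
Proof. by []. Qed.

Lemma sumJ (e : config n) i (c : R) :
  \sum_j (if valid_config e && (j \in Jset e i) then c else 0) =
  if valid_config e then m%:R * c else 0.
Proof.
case: ifP => hv /=; last by rewrite big1.
by rewrite -big_mkcond sumr_const (Jcard hn hev) // mulr_natl.
Qed.

Lemma Hswap (e : config n) i j (c : R) :
  (if ~~ odd (\sum_r swap_mid e i j r i) && valid_config (swap_mid e i j)
      && (j \in Jset (swap_mid e i j) i) then c else 0) =
  (if odd (\sum_r e r i) && valid_config e && (j \in Jset e i) then c else 0).
Proof.
rewrite (va_swap hn hev) (J_swap hn hev); case hj: (j \in Jset e i); last by rewrite !andbF.
rewrite (odd_swap hn hev) tpermL (J_neq hn hev hj).
by case: (e (r0 hn hev) i); case: (odd _).
Qed.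

Lemma key i (G : nat -> R) :
  \sum_(e : config n) \sum_j (if valid_config e && (j \in Jset e i)
                              then G (Xtot (Xconf_s (e, i, j))) else 0)
  = (m + m)%:R * \sum_(e : config n) (if valid_config e then G (Xtot e) * (bulb e i)%:R else 0).
Proof.
rewrite (bigID (fun e : config n => odd (\sum_r e r i))) /=.
rewrite [in RHS](bigID (fun e : config n => odd (\sum_r e r i))) /=.
rewrite [X in _ * (_ + X)]big1 ?addr0; last first.
  by move=> e he; rewrite bulbE (negbTE he) mulr0; case: ifP.
rewrite natrD mulrDl; congr (_ + _).
  rewrite mulr_sumr; apply: eq_bigr => e he.
  have hb : bulb e i = 1%N by rewrite bulbE he.
  by rewrite hb /= sumJ mulr1; case: ifP => //; rewrite mulr0.
set H := fun p : config n * 'I_n =>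
  if ~~ odd (\sum_r p.1 r i) && valid_config p.1 && (p.2 \in Jset p.1 i)
  then G (Xtot (swap_mid p.1 i p.2)) else 0.
have -> : \sum_(e : config n | ~~ odd (\sum_r e r i)) \sum_j
   (if valid_config e && (j \in Jset e i) then G (Xtot (if bulb e i == 1%N then e else swap_mid e i j)) else 0)
   = \sum_p H p.
  rewrite sum_pair big_mkcond; apply: eq_bigr => e _ /=.
  case: ifP => he /=.
    have hb : bulb e i = 0%N by rewrite bulbE (negbTE he).
    by apply: eq_bigr => j _; rewrite /H /= hb /= he.
  by rewrite big1 // => x _; rewrite /H /= he.
rewrite (reindex_inj (h := fun p : config n * 'I_n => (swap_mid p.1 i p.2, p.2))); last first.
  by apply: (can_inj (g := fun p : config n * 'I_n => (swap_mid p.1 i p.2, p.2))); case=> e j /=; rewrite (swapK hn hev).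
rewrite sum_pair mulr_sumr [RHS]big_mkcond; apply: eq_bigr => e _ /=.
under eq_bigr do rewrite /H /= Hswap (swapK hn hev).
case: ifP => he /=; last by rewrite big1.
by rewrite sumJ bulbE he mulr1; case: ifP => //; rewrite mulr0.
Qed.


Lemma E_gen (f : Omega n -> R) :
  Expect (@joint_prob R n) f = K / n%:R / m%:R *
  \sum_(e : config n) \sum_i \sum_j (if valid_config e && (j \in Jset e i) then f (e, i, j) else 0).
Proof.
rewrite /Expect sum_pair sum_pair mulr_sumr; apply: eq_bigr => e _.
rewrite mulr_sumr; apply: eq_bigr => i _.
rewrite mulr_sumr; apply: eq_bigr => j _.
rewrite /joint_prob spE; case hv: (valid_config e) => /=; last by rewrite !mul0r mulr0.
rewrite (Jcard hn hev) //; case: ifP => hj /=; by rewrite ?mulr0 ?mul0r.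
Qed.

Lemma m_neq0 : (m%:R : R) != 0.
Proof. by rewrite pnatr_eq0 -lt0n m_pos. Qed.

Lemma n_neq0 : (n%:R : R) != 0.
Proof. by rewrite pnatr_eq0 -lt0n. Qed.

Lemma nm : n = (m + m)%N.
Proof. have := n_mod2 hev; rewrite /m; lia. Qed.

Lemma E_e (F : config n -> R) :
  Expect (@joint_prob R n) (fun w => F w.1.1) =
  K * \sum_(e : config n) (if valid_config e then F e else 0).
Proof.
rewrite E_gen /=.
under eq_bigr do under eq_bigr do rewrite sumJ.
under eq_bigr do rewrite sumr_const card_ord.
rewrite !mulr_sumr; apply: eq_bigr => e _.
case: ifP => _; last by rewrite mul0rn !mulr0.
rewrite -mulr_natr; field.
by rewrite m_neq0 n_neq0.
Qed.

Lemma E_s (G : nat -> R) :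
  Expect (@joint_prob R n) (fun w => G (Xsw w)) =
  K / n%:R / m%:R * \sum_i ((m + m)%:R *
     \sum_(e : config n) (if valid_config e then G (Xtot e) * (bulb e i)%:R else 0)).
Proof.
rewrite E_gen exchange_big; congr (_ * _); apply: eq_bigr => i _.
by rewrite -key.
Qed.

Lemma sum_X (H : config n -> R) :
  \sum_(e : config n) (if valid_config e then H e * (Xtot e)%:R else 0) =
  \sum_i \sum_(e : config n) (if valid_config e then H e * (bulb e i)%:R else 0).
Proof.
rewrite exchange_big; apply: eq_bigr => e _; case: ifP => _.
  by rewrite /Xtot natr_sum mulr_sumr.
by rewrite big1.
Qed.

Let A := \sum_(e : config n) (if valid_config e then 1 else 0 : R).

Lemma KA : K * A = 1.
Proof.
rewrite -total /A mulr_sumr; apply: eq_bigr => e _.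
by case: ifP; rewrite ?mulr1 ?mulr0.
Qed.

Lemma half i :
  (\sum_(e : config n) (if valid_config e then 1 * (bulb e i)%:R else 0)) * 2 = A.
Proof.
have := key i (fun _ => 1).
under eq_bigr do rewrite sumJ.
move=> h; have : m%:R * A = (m + m)%:R * \sum_(e : config n)
   (if valid_config e then 1 * (bulb e i)%:R else 0).
  rewrite -h /A mulr_sumr; apply: eq_bigr => e _; case: ifP => _ //.
  by rewrite mulr0.
move=> hh; rewrite natrD mulrDl -mulrDr in hh; by rewrite (mulfI m_neq0 hh) mulr_natr mulr2n.
Qed.

Lemma K_neq0 : K != 0.
Proof. by apply/eqP => h; have := KA; rewrite h mul0r => /eqP; rewrite eq_sym oner_eq0. Qed.

Lemma part1 (g : R -> R) :
  Expect (@joint_prob R n) (fun w => (Xw w)%:R * g (Xw w)%:R) =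
  Expect (@joint_prob R n) (fun w => (Xw w)%:R) *
  Expect (@joint_prob R n) (fun w => g (Xsw w)%:R).
Proof.
rewrite (E_e (fun e => (Xtot e)%:R * g (Xtot e)%:R)) (E_e (fun e => (Xtot e)%:R)).
rewrite (E_s (fun k => g k%:R)) -mulr_sumr.
rewrite -(sum_X (fun e => g (Xtot e)%:R)).
have hX : \sum_(e : config n) (if valid_config e then (Xtot e)%:R else 0) = n%:R * A / 2.
  have -> : \sum_(e : config n) (if valid_config e then (Xtot e)%:R else 0) =
     \sum_(e : config n) (if valid_config e then 1 * (Xtot e)%:R else 0 : R).
    by apply: eq_bigr => e _; rewrite mul1r.
  rewrite sum_X.
  have -> : \sum_i \sum_(e : config n) (if valid_config e then 1 * (bulb e i)%:R else 0) = \sum_(i < n) (A / 2).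
    have two : (0 : R) < 2 by lra.
    by apply: eq_bigr => i _; rewrite -(half i) mulfK // lt0r_neq0.
  by rewrite sumr_const card_ord -mulrA mulr_natl.
have -> : \sum_(e : config n) (if valid_config e then g (Xtot e)%:R * (Xtot e)%:R else 0)
   = \sum_(e : config n) (if valid_config e then (Xtot e)%:R * g (Xtot e)%:R else 0).
  by apply: eq_bigr => e _; rewrite mulrC.
have hA : A = K^-1 by apply: (mulfI K_neq0); rewrite KA mulfV // K_neq0.
rewrite hX hA natrD.
set S := \sum_(e : config n) _.
field.
by rewrite K_neq0 n_neq0 m_neq0.
Qed.

End Real.

Theorem theorem3p1 (R : realType) (n : nat) (n_even : ~~ odd n) (n_pos : (0 < n)%N) :
  size_bias_of (@joint_prob R n) (fun w => (Xw w)%:R) (fun w => (Xsw w)%:R) /\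
  (forall w : Omega n, 0 < joint_prob R w ->
     let: (e, i, j) := w in
     Xsw w = (Xw w + 2 * ((bulb e i == 0) && (bulb e j == 0)))%N /\
     (Xw w <= Xsw w <= Xw w + 2)%N).
Proof.
split.
  move=> g _ _.
  exact: part1.
move=> [[e i] j] /=.
rewrite /joint_prob /switch_prob.
case hv: (valid_config e); last by rewrite !mul0r ltxx.
case hj: (j \in Jset e i); last by rewrite mulr0 ltxx.
move=> _; rewrite /Xsw /Xw /= !bulbE.
case hb: (odd (\sum_r e r i)) => /=.
  by rewrite addn0 leqnn leq_addr.
rewrite (Xtot_swap n_pos n_even hj) ?hb // bulbE.
case: (odd (\sum_r e r j)) => /=; lia.
Qed.
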